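(* Let $G_1$ and $G_2$ be graphs with transition matrices $H_{G_1}(t)$ and $H_{G_2}(t)$. Suppose that $G_1$ is periodic at a vertex $u$ at time $\tau\neq 0$, i.e. $H_{G_1}(\tau)e_u=\gamma e_u$ for some $|\gamma|=1$, and that $G_2$ exhibits perfect state transfer from a vertex $v$ to a vertex $w$ at time $\eta\neq 0$, i.e. $H_{G_2}(\eta)e_w=\gamma' e_v$ for some $|\gamma'|=1$. If $\tau$ and $\eta$ are linearly independent over $\mathbb Q$, then the Cartesian product $G_1\square G_2$ has pretty good state transfer between the vertices $(u,v)$ and $(u,w)$.
   Context: The transition matrix of a graph with adjacency matrix $A$ is $H(t)=\exp(-itA)$, $t\in\mathbb R$; $e_u$ is the standard basis vector of vertex $u$. The Cartesian product $G_1\square G_2$ has vertex set $V(G_1)\times V(G_2)$, with $(u_1,u_2)\sim(v_1,v_2)$ iff either $u_1\sim v_1$ in $G_1$ and $u_2=v_2$, or $u_1=v_1$ and $u_2\sim v_2$ in $G_2$. A graph has pretty good state transfer between vertices $x$ and $y$ if for every $\epsilon>0$ there is $t\in\mathbb R$ with $\big||e_x^TH(t)e_y|-1\big|<\epsilon$. *)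

(* Defs.v *)
From Stdlib Require Import Reals QArith.
From mathcomp Require Import all_boot.
Set Implicit Arguments.
Unset Strict Implicit.
Unset Printing Implicit Defensive.

(* A graph: finite vertex type V with adjacency relation e (symmetric,
   irreflexive = simple undirected graph).  A is its adjacency matrix,
   A x y = 1 iff e x y. *)
Definition simple_graph (V : finType) (e : rel V) : Prop :=
  @symmetric V e /\ @irreflexive V e.

Fixpoint adjpow (V : finType) (e : rel V) (k : nat) (x y : V) : nat :=
  match k with
  | O => nat_of_bool (x == y)
  | k'.+1 => (\sum_(z : V | e x z) adjpow e k' z y)%N
  end.

Open Scope R_scope.

(* Complex numbers as pairs (real part, imaginary part). *)
Definition Cx := (R * R)%type.
Definition Cmod (z : Cx) : R := sqrt (fst z * fst z + snd z * snd z).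
Definition Cscale (g : Cx) (b : bool) : Cx := if b then g else (0, 0).

Definition negi_pow (k : nat) : Cx :=
  match Nat.modulo k 4%nat with
  | O => (1, 0)
  | S O => (0, (-1))
  | S (S O) => ((-1), 0)
  | _ => (0, 1)
  end.

(* k-th term of the exponential series of exp(-itA), entry (x,y):
   (-it)^k / k! * (A^k)_{xy} *)
Definition Hterm (V : finType) (e : rel V) (t : R) (x y : V) (k : nat) : Cx :=
  let c := (t ^ k / INR (Factorial.fact k)) * INR (adjpow e k x y) in
  (fst (negi_pow k) * c, snd (negi_pow k) * c).

(* "(H(t))_{xy} = z", where H(t) = exp(-itA) = sum_k (-itA)^k / k!,
   i.e. the series converges (componentwise) to z. *)
Definition H_entry (V : finType) (e : rel V) (t : R) (x y : V) (z : Cx) : Prop :=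
  Un_cv (fun n => sum_f_R0 (fun k => fst (Hterm e t x y k)) n) (fst z) /\
  Un_cv (fun n => sum_f_R0 (fun k => snd (Hterm e t x y k)) n) (snd z).

Definition cart_rel (V1 V2 : finType) (e1 : rel V1) (e2 : rel V2)
  : rel (V1 * V2)%type :=
  fun p q => (e1 p.1 q.1 && (p.2 == q.2)) || ((p.1 == q.1) && e2 p.2 q.2).

Definition pgst (V : finType) (e : rel V) (x y : V) : Prop :=
  forall eps : R, eps > 0 ->
    exists (t : R) (z : Cx), H_entry e t x y z /\ Rabs (Cmod z - 1) < eps.

Definition Q_lin_indep (a b : R) : Prop :=
  forall p q : Q, Q2R p * a + Q2R q * b = 0 -> (p == 0)%Q /\ (q == 0)%Q.

(* Main.v *)
Require Import Defs.
From Stdlib Require Import Reals QArith Lra Lia Psatz ZArith Classical.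
From mathcomp Require Import all_boot zify.
From HB Require Import structures.
From Coquelicot Require Import Rcomplements Hierarchy Lim_seq Series PSeries ElemFct.
Open Scope R_scope.

Lemma Rplus_0l' : left_id 0 Rplus. Proof. intro; ring. Qed.
Lemma Rplus_A' : associative Rplus. Proof. intros ???; ring. Qed.
Lemma Rplus_C' : commutative Rplus. Proof. intros ??; ring. Qed.
HB.instance Definition _ := Monoid.isComLaw.Build R 0 Rplus Rplus_A' Rplus_C' Rplus_0l'.

Notation "\rsum_ ( i : T ) F" := (\big[Rplus/0]_(i : T) F)
  (at level 41, F at level 41, i, T at level 50).

Lemma rsum_scal (T : finType) (c : R) (F : T -> R) :
  c * (\big[Rplus/0]_(i : T) F i) = \big[Rplus/0]_(i : T) (c * F i).
Proof.
elim/big_rec2: _ => [|i a b _ <-]; ring.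
Qed.

Lemma rsum_split (T : finType) (F G : T -> R) :
  \big[Rplus/0]_(i : T) (F i + G i) = \big[Rplus/0]_(i : T) F i + \big[Rplus/0]_(i : T) G i.
Proof. exact: big_split. Qed.

Lemma rsum_opp (T : finType) (F : T -> R) :
  \big[Rplus/0]_(i : T) (- F i) = - \big[Rplus/0]_(i : T) F i.
Proof. elim/big_rec2: _ => [|i a b _ ->]; ring. Qed.

Lemma rsum_one (T : finType) (F : T -> R) (b : T) :
  (forall z, z != b -> F z = 0) -> \big[Rplus/0]_(i : T) F i = F b.
Proof.
move=> H; rewrite (bigD1 b) //= big1 ?Rplus_0_r //.
Qed.

Lemma INR_sum (T : finType) (P : pred T) (F : T -> nat) :
  INR (\sum_(i : T | P i) F i)%N = \big[Rplus/0]_(i : T | P i) INR (F i).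
Proof.
apply: (big_morph INR). move=> x y; exact: plus_INR. done.
Qed.

Lemma rsum_sumf (T : finType) (F : T -> nat -> R) (n : nat) :
  \big[Rplus/0]_(i : T) sum_f_R0 (F i) n = sum_f_R0 (fun j => \big[Rplus/0]_(i : T) F i j) n.
Proof.
elim: n => [|n IH] /=; first done.
by rewrite rsum_split IH.
Qed.

Definition np1 k := fst (negi_pow k).
Definition np2 k := snd (negi_pow k).

Lemma negi_pow_mod k : negi_pow k = negi_pow (Nat.modulo k 4).
Proof. by rewrite /negi_pow Nat.Div0.mod_mod. Qed.

Lemma np_add j k :
  np1 (j + k) = np1 j * np1 k - np2 j * np2 k /\
  np2 (j + k) = np1 j * np2 k + np2 j * np1 k.
Proof.
rewrite /np1 /np2 (negi_pow_mod (j+k)) (negi_pow_mod j) (negi_pow_mod k) Nat.Div0.add_mod.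
have := Nat.mod_upper_bound j 4; have := Nat.mod_upper_bound k 4.
move: (Nat.modulo j 4) (Nat.modulo k 4) => a b Hb Ha.
have Ha' : (a < 4)%coq_nat by apply Ha; lia.
have Hb' : (b < 4)%coq_nat by apply Hb; lia.
destruct a as [|[|[|[|a]]]]; try lia; destruct b as [|[|[|[|b]]]]; try lia;
  rewrite /negi_pow /=; split; lra.
Qed.

Lemma np_bound k : Rabs (np1 k) <= 1 /\ Rabs (np2 k) <= 1.
Proof.
rewrite /np1 /np2 /negi_pow.
have := Nat.mod_upper_bound k 4; move: (Nat.modulo k 4) => a Ha.
have Ha' : (a < 4)%coq_nat by apply Ha; lia.
destruct a as [|[|[|[|a]]]]; try lia; simpl; rewrite ?Rabs_R0 ?Rabs_R1 ?Rabs_Ropp ?Rabs_R1; lra.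
Qed.

Lemma pow_neg t k : (- t) ^ k = if Nat.even k then t ^ k else - t ^ k.
Proof.
elim: k => [|k IH]; first done.
change ((-t)^(S k)) with (-t * (-t)^k). change (t^(S k)) with (t * t^k).
rewrite IH Nat.even_succ -Nat.negb_even; case: (Nat.even k) => /=; ring.
Qed.

Lemma np_parity k :
  (Nat.even k = false -> np1 k = 0) /\ (Nat.even k = true -> np2 k = 0).
Proof.
rewrite /np1 /np2 (negi_pow_mod k).
have Hk := Nat.div_mod k 4 ltac:(lia).
have := Nat.mod_upper_bound k 4.
move: (Nat.modulo k 4) Hk => a -> Ha.
have Ha' : (a < 4)%coq_nat by apply Ha; lia.
rewrite Nat.even_add Nat.even_mul /=.
destruct a as [|[|[|[|a]]]]; try lia; rewrite /negi_pow /=; split => //; rewrite Nat.even_add Nat.even_mul /=; done.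
Qed.

Lemma Hterm_opp (V : finType) (e : rel V) t x y k :
  fst (Hterm e (-t) x y k) = fst (Hterm e t x y k) /\
  snd (Hterm e (-t) x y k) = - snd (Hterm e t x y k).
Proof.
rewrite /Hterm /= pow_neg.
have [H1 H2] := np_parity k. rewrite /np1 /np2 in H1 H2.
case E: (Nat.even k); [rewrite H2 // | rewrite H1 //]; rewrite /Rdiv; split; ring.
Qed.

Set Implicit Arguments.
Unset Strict Implicit.

Lemma adjpow_bound (V : finType) (e : rel V) k x y :
  (adjpow e k x y <= #|V| ^ k)%N.
Proof.
elim: k x y => [|k IH] x y /=; first by case: (x == y).
apply: (@leq_trans (\sum_(z | e x z) #|V| ^ k)%N); first by apply: leq_sum => z _; exact: IH.
rewrite sum_nat_const expnS leq_mul2r; apply/orP; right; exact: max_card.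
Qed.

Lemma natpow_expn m k : Nat.pow m k = (m ^ k)%N.
Proof. elim: k => [|k IH] //=; by rewrite IH expnS. Qed.

Definition bnd (x : R) (k : nat) := x ^ k / INR (fact k).

Lemma bnd_is_series x : is_series (bnd x) (exp x).
Proof.
have := is_exp_Reals x. rewrite is_pseries_Reals /Pser => H.
apply/is_series_Reals. move=> eps he; have [N HN] := H eps he; exists N => n hn.
have -> : sum_f_R0 (bnd x) n = sum_f_R0 (fun n0 : nat => / INR (fact n0) * x ^ n0) n.
  apply: PartSum.sum_eq => i _; rewrite /bnd /Rdiv; ring.
exact: HN.
Qed.

Lemma bnd_ex x : ex_series (bnd x).
Proof. eexists; exact: bnd_is_series. Qed.

Lemma bnd_ge0 x k : 0 <= x -> 0 <= bnd x k.
Proof.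
move=> hx; rewrite /bnd /Rdiv; apply: Rmult_le_pos; first exact: pow_le.
apply/Rlt_le/Rinv_0_lt_compat/lt_0_INR/lt_O_fact.
Qed.

Lemma coef_bound (V : finType) (e : rel V) t x y k :
  Rabs (t ^ k / INR (fact k) * INR (adjpow e k x y)) <= bnd (Rabs t * INR #|V|) k.
Proof.
rewrite /bnd Rpow_mult_distr.
have hf : 0 < INR (fact k) by apply/lt_0_INR/lt_O_fact.
rewrite Rabs_mult /Rdiv Rabs_mult RPow_abs (Rabs_pos_eq (/ _)); last by apply/Rlt_le/Rinv_0_lt_compat.
rewrite (Rabs_pos_eq (INR _)); last exact: pos_INR.
have hb : INR (adjpow e k x y) <= INR #|V| ^ k.
  rewrite -pow_INR; apply: le_INR; rewrite natpow_expn; apply/leP; exact: adjpow_bound.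
have ha : 0 <= Rabs (t^k) * / INR (fact k) by apply Rmult_le_pos; [apply Rabs_pos | apply/Rlt_le/Rinv_0_lt_compat].
replace (Rabs (t ^ k) * INR #|V| ^ k * / INR (fact k)) with (Rabs (t ^ k) * / INR (fact k) * INR #|V| ^ k) by ring.
by apply: Rmult_le_compat_l.
Qed.

Lemma Hterm_bound (V : finType) (e : rel V) t x y k :
  Rabs (fst (Hterm e t x y k)) <= bnd (Rabs t * INR #|V|) k /\
  Rabs (snd (Hterm e t x y k)) <= bnd (Rabs t * INR #|V|) k.
Proof.
have [h1 h2] := np_bound k. have hc := coef_bound e t x y k.
rewrite /np1 /np2 in h1 h2.
rewrite /Hterm /=.
set c := t ^ k / INR (fact k) * INR (adjpow e k x y) in hc *.
rewrite !(Rabs_mult _ c).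
have := Rabs_pos c.
have := Rabs_pos (negi_pow k).1. have := Rabs_pos (negi_pow k).2.
move=> *; clearbody c; move: hc; move: (bnd _ k) => B hc; split; nra.
Qed.

Definition re (V : finType) (e : rel V) t x y k := fst (Hterm e t x y k).
Definition im (V : finType) (e : rel V) t x y k := snd (Hterm e t x y k).

Lemma re_abs_ex (V : finType) (e : rel V) t x y :
  ex_series (fun k => Rabs (re e t x y k)).
Proof.
apply: (ex_series_le _ (bnd (Rabs t * INR #|V|))); last exact: bnd_ex.
move=> n; rewrite /norm /= /abs /= Rabs_Rabsolu; exact: (Hterm_bound e t x y n).1.
Qed.

Lemma im_abs_ex (V : finType) (e : rel V) t x y :
  ex_series (fun k => Rabs (im e t x y k)).
Proof.
apply: (ex_series_le _ (bnd (Rabs t * INR #|V|))); last exact: bnd_ex.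
move=> n; rewrite /norm /= /abs /= Rabs_Rabsolu; exact: (Hterm_bound e t x y n).2.
Qed.

Definition Ent (V : finType) (e : rel V) t x y : Cx :=
  (Series (re e t x y), Series (im e t x y)).

Lemma Ent_re (V : finType) (e : rel V) t x y : is_series (re e t x y) (fst (Ent e t x y)).
Proof. apply: Series_correct; apply: ex_series_Rabs; exact: re_abs_ex. Qed.
Lemma Ent_im (V : finType) (e : rel V) t x y : is_series (im e t x y) (snd (Ent e t x y)).
Proof. apply: Series_correct; apply: ex_series_Rabs; exact: im_abs_ex. Qed.

Lemma is_series_Un (a : nat -> R) l : is_series a l <-> Un_cv (fun n => sum_f_R0 a n) l.
Proof. rewrite is_series_Reals /infinite_sum /Un_cv /R_dist; split => //. Qed.

Lemma Ent_H (V : finType) (e : rel V) t x y : H_entry e t x y (Ent e t x y).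
Proof. split; apply/is_series_Un; [exact: Ent_re | exact: Ent_im]. Qed.

Lemma H_Ent (V : finType) (e : rel V) t x y z : H_entry e t x y z -> z = Ent e t x y.
Proof.
case=> h1 h2. have [k1 k2] := Ent_H e t x y.
move: z h1 h2 => [a b] /= h1 h2.
rewrite (UL_sequence _ _ _ h1 k1) (UL_sequence _ _ _ h2 k2).
by case: (Ent e t x y).
Qed.

Definition cmul (a b : Cx) : Cx := (a.1 * b.1 - a.2 * b.2, a.1 * b.2 + a.2 * b.1).

Lemma cauchy_C (a1 a2 b1 b2 : nat -> R) A1 A2 B1 B2 :
  is_series a1 A1 -> is_series a2 A2 -> is_series b1 B1 -> is_series b2 B2 ->
  ex_series (fun n => Rabs (a1 n)) -> ex_series (fun n => Rabs (a2 n)) ->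
  ex_series (fun n => Rabs (b1 n)) -> ex_series (fun n => Rabs (b2 n)) ->
  is_series (fun n => sum_f_R0 (fun k => a1 k * b1 (n - k)%coq_nat - a2 k * b2 (n - k)%coq_nat) n) (A1 * B1 - A2 * B2) /\
  is_series (fun n => sum_f_R0 (fun k => a1 k * b2 (n - k)%coq_nat + a2 k * b1 (n - k)%coq_nat) n) (A1 * B2 + A2 * B1).
Proof.
move=> ha1 ha2 hb1 hb2 xa1 xa2 xb1 xb2.
have m11 := is_series_mult _ _ _ _ ha1 hb1 xa1 xb1.
have m22 := is_series_mult _ _ _ _ ha2 hb2 xa2 xb2.
have m12 := is_series_mult _ _ _ _ ha1 hb2 xa1 xb2.
have m21 := is_series_mult _ _ _ _ ha2 hb1 xa2 xb1.
split.
- have := is_series_minus _ _ _ _ m11 m22.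
  apply: is_series_ext => n; by rewrite minus_sum.
- have := is_series_plus _ _ _ _ m12 m21.
  apply: is_series_ext => n; by rewrite plus_sum.
Qed.

Lemma exp_prod (c d : nat -> R) X Y :
  (forall k, Rabs (c k) <= bnd X k) -> (forall k, Rabs (d k) <= bnd Y k) ->
  let A := (Series (fun k => np1 k * c k), Series (fun k => np2 k * c k)) in
  let B := (Series (fun k => np1 k * d k), Series (fun k => np2 k * d k)) in
  is_series (fun n => np1 n * sum_f_R0 (fun k => c k * d (n - k)%coq_nat) n) (cmul A B).1 /\
  is_series (fun n => np2 n * sum_f_R0 (fun k => c k * d (n - k)%coq_nat) n) (cmul A B).2.
Proof.
move=> hc hd A B.
have ex1 : forall (f : nat -> R) (g : nat -> R) Z, (forall k, Rabs (f k) <= 1) ->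
    (forall k, Rabs (g k) <= bnd Z k) -> ex_series (fun n => Rabs (f n * g n)).
  move=> f g Z hf hg; apply: (ex_series_le _ (bnd Z)); last exact: bnd_ex.
  move=> n; rewrite /norm /= /abs /= Rabs_Rabsolu Rabs_mult.
  have := hf n; have := hg n; have := Rabs_pos (f n); have := Rabs_pos (g n).
  move: (bnd Z n) => b; move=> *; nra.
have h1 : forall k, Rabs (np1 k) <= 1 by move=> k; exact: (np_bound k).1.
have h2 : forall k, Rabs (np2 k) <= 1 by move=> k; exact: (np_bound k).2.
have xa1 := ex1 _ _ _ h1 hc. have xa2 := ex1 _ _ _ h2 hc.
have xb1 := ex1 _ _ _ h1 hd. have xb2 := ex1 _ _ _ h2 hd.
have [p1 p2] := cauchy_C
  (Series_correct _ (ex_series_Rabs _ xa1)) (Series_correct _ (ex_series_Rabs _ xa2))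
  (Series_correct _ (ex_series_Rabs _ xb1)) (Series_correct _ (ex_series_Rabs _ xb2))
  xa1 xa2 xb1 xb2.
split.
- move: p1; apply: is_series_ext => n; rewrite scal_sum; apply: PartSum.sum_eq => k hk.
  have [e1 _] := np_add k (n - k)%coq_nat.
  have -> : np1 n = np1 k * np1 (n - k)%coq_nat - np2 k * np2 (n - k)%coq_nat.
    by rewrite -e1; congr np1; lia.
  ring.
- move: p2; apply: is_series_ext => n; rewrite scal_sum; apply: PartSum.sum_eq => k hk.
  have [_ e2] := np_add k (n - k)%coq_nat.
  have -> : np2 n = np1 k * np2 (n - k)%coq_nat + np2 k * np1 (n - k)%coq_nat.
    by rewrite -e2; congr np2; lia.
  ring.
Qed.

Definition coef (V : finType) (e : rel V) t x y k := t ^ k / INR (fact k) * INR (adjpow e k x y).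

Lemma adjpow_add (V : finType) (e : rel V) j k x y :
  adjpow e (j + k) x y = (\sum_(z : V) adjpow e j x z * adjpow e k z y)%N.
Proof.
elim: j x => [|j IH] x.
  rewrite add0n /= (bigD1 x) //= eqxx mul1n big1 ?addn0 // => z hz.
  by rewrite eq_sym (negbTE hz).
rewrite addSn /= (eq_bigr _ (fun z1 _ => IH z1)) exchange_big /=.
by apply: eq_bigr => z _; rewrite big_distrl.
Qed.

Lemma binom_fact s t n :
  (s + t) ^ n / INR (fact n) =
  sum_f_R0 (fun k => s ^ k / INR (fact k) * (t ^ (n - k)%coq_nat / INR (fact (n - k)%coq_nat))) n.
Proof.
rewrite Binomial.binomial /Rdiv Rmult_comm scal_sum.
apply: PartSum.sum_eq => k hk; rewrite /Binomial.C.
have h1 := INR_fact_neq_0 n. have h2 := INR_fact_neq_0 k. have h3 := INR_fact_neq_0 (n - k)%coq_nat.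
field; auto.
Qed.

Lemma coef_add (V : finType) (e : rel V) s t x a n :
  coef e (s + t) x a n =
  \big[Rplus/0]_(z : V) sum_f_R0 (fun k => coef e s x z k * coef e t z a (n - k)%coq_nat) n.
Proof.
rewrite rsum_sumf /coef.
have -> : sum_f_R0 (fun j => \big[Rplus/0]_(i : V)
   (s ^ j / INR (fact j) * INR (adjpow e j x i) *
    (t ^ (n - j)%coq_nat / INR (fact (n - j)%coq_nat) * INR (adjpow e (n - j)%coq_nat i a)))) n
  = sum_f_R0 (fun k => s ^ k / INR (fact k) * (t ^ (n - k)%coq_nat / INR (fact (n - k)%coq_nat))
       * INR (adjpow e n x a)) n.
  apply: PartSum.sum_eq => k hk.
  have -> : adjpow e n x a = adjpow e (k + (n - k)%coq_nat) x a by congr adjpow; lia.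
  rewrite adjpow_add INR_sum rsum_scal; apply: eq_bigr => z _; rewrite mult_INR; ring.
by rewrite -scal_sum binom_fact Rmult_comm.
Qed.

Lemma is_series_zero : is_series (fun _ : nat => 0) 0.
Proof.
apply/is_series_Un => eps he; exists 0%nat => n _.
have -> : sum_f_R0 (fun _ : nat => 0) n = 0 by elim: n => [|n IH] //=; rewrite IH; ring.
rewrite /R_dist Rminus_0_r Rabs_R0; lra.
Qed.

Lemma is_series_rsum (T : finType) (f : T -> nat -> R) (L : T -> R) :
  (forall z, is_series (f z) (L z)) ->
  is_series (fun n => \big[Rplus/0]_(z : T) f z n) (\big[Rplus/0]_(z : T) L z).
Proof.
move=> H.
suff: forall r : seq T, is_series (fun n => \big[Rplus/0]_(z <- r) f z n) (\big[Rplus/0]_(z <- r) L z) by apply.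
elim=> [|z r IH].
  rewrite big_nil; apply: (is_series_ext (fun _ => 0)); last exact: is_series_zero.
  by move=> n; rewrite big_nil.
rewrite big_cons; have := is_series_plus _ _ _ _ (H z) IH.
by apply: is_series_ext => n; rewrite big_cons.
Qed.

Lemma coef_bnd (V : finType) (e : rel V) t x y k :
  Rabs (coef e t x y k) <= bnd (Rabs t * INR #|V|) k.
Proof. exact: coef_bound. Qed.

Lemma Ent_add (V : finType) (e : rel V) s t x a :
  Ent e (s + t) x a =
  (\big[Rplus/0]_(z : V) (cmul (Ent e s x z) (Ent e t z a)).1,
   \big[Rplus/0]_(z : V) (cmul (Ent e s x z) (Ent e t z a)).2).
Proof.
have P z := exp_prod (coef_bnd e s x z) (coef_bnd e t z a).
rewrite /Ent; congr pair; apply: is_series_unique.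
- have := is_series_rsum (fun z => (P z).1).
  apply: is_series_ext => n; rewrite -rsum_scal -coef_add //.
- have := is_series_rsum (fun z => (P z).2).
  apply: is_series_ext => n; rewrite -rsum_scal -coef_add //.
Qed.

Definition Col (V : finType) (e : rel V) t a b c := forall x, Ent e t x a = Cscale c (x == b).

Lemma Ent_add_col (V : finType) (e : rel V) s t a b c :
  Col e t a b c -> forall x, Ent e (s + t) x a = cmul (Ent e s x b) c.
Proof.
move=> H x; rewrite Ent_add; congr pair.
- rewrite (@rsum_one _ _ b); first by rewrite H eqxx.
  by move=> z hz; rewrite H (negbTE hz) /= /cmul /=; ring.
- rewrite (@rsum_one _ _ b); first by rewrite H eqxx.
  by move=> z hz; rewrite H (negbTE hz) /= /cmul /=; ring.
Qed.

Lemma is_series_single (a : nat -> R) : (forall k, (0 < k)%N -> a k = 0) -> is_series a (a 0%N).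
Proof.
move=> H; apply/is_series_Un => eps he; exists 0%nat => n _.
have -> : sum_f_R0 a n = a 0%N.
  elim: n => [|n IH] //=; rewrite IH (H n.+1) //; ring.
rewrite /R_dist Rminus_eq_0 Rabs_R0; lra.
Qed.

Lemma Ent_0 (V : finType) (e : rel V) x y : Ent e 0 x y = Cscale (1, 0) (x == y).
Proof.
rewrite /Ent; apply: injective_projections; rewrite /=.
- rewrite (is_series_unique _ _ (is_series_single _)).
    by rewrite /re /Hterm /negi_pow /=; case: (x == y) => /=; field.
  by move=> [|k] //= _; rewrite /re /Hterm /= /Rdiv; ring.
- rewrite (is_series_unique _ _ (is_series_single _)).
    by rewrite /im /Hterm /negi_pow /=; case: (x == y) => /=; field.
  by move=> [|k] //= _; rewrite /im /Hterm /= /Rdiv; ring.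
Qed.

Definition conjc (c : Cx) : Cx := (c.1, - c.2).

Lemma Ent_opp (V : finType) (e : rel V) t x y : Ent e (- t) x y = conjc (Ent e t x y).
Proof.
rewrite /Ent /conjc /=; congr pair.
- by apply: Series_ext => n; rewrite /re (Hterm_opp _ e t x y n).1.
- rewrite -Series_opp; apply: Series_ext => n; by rewrite /im (Hterm_opp _ e t x y n).2.
Qed.

Definition unitc (c : Cx) := c.1 * c.1 + c.2 * c.2 = 1.

Lemma unitc_mul c d : unitc c -> unitc d -> unitc (cmul c d).
Proof. rewrite /unitc /cmul /= => h1 h2. rewrite -[1]Rmult_1_l -{1}h1 -h2; ring. Qed.

Lemma unitc_conj c : unitc c -> unitc (conjc c).
Proof. rewrite /unitc /conjc /= => h; rewrite -h; ring. Qed.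

Lemma unitc_1 : unitc (1, 0). Proof. rewrite /unitc /=; ring. Qed.

Lemma Col_add (V : finType) (e : rel V) s t a b b' c d :
  Col e t a b c -> Col e s b b' d -> Col e (s + t) a b' (cmul d c).
Proof.
move=> h1 h2 x; rewrite (Ent_add_col s h1) h2.
by case: (x == b') => //=; rewrite /cmul /=; congr pair; ring.
Qed.

Lemma Col_conj (V : finType) (e : rel V) t a b c :
  Col e t a b c -> Col e (- t) a b (conjc c).
Proof.
move=> h x; rewrite Ent_opp h.
by case: (x == b) => //=; rewrite /conjc /=; congr pair; ring.
Qed.

Lemma Col_inv (V : finType) (e : rel V) t a b c :
  Col e t a b c -> unitc c -> Col e (- t) b a (conjc c).
Proof.
move=> h hu x.
have := Ent_add_col (- t) h x. rewrite Rplus_opp_l Ent_0.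
move: (Ent e (- t) x b) => z.
rewrite /cmul /conjc /unitc in hu *.
have K1 : z.1 * (c.1 * c.1 + c.2 * c.2) = c.1 * (z.1 * c.1 - z.2 * c.2) + c.2 * (z.1 * c.2 + z.2 * c.1) by ring.
have K2 : z.2 * (c.1 * c.1 + c.2 * c.2) = c.1 * (z.1 * c.2 + z.2 * c.1) - c.2 * (z.1 * c.1 - z.2 * c.2) by ring.
rewrite hu !Rmult_1_r in K1 K2.
case: (x == a) => /= /pair_equal_spec [e1 e2]; apply: injective_projections => /=;
  [rewrite K1 | rewrite K2 | rewrite K1 | rewrite K2]; rewrite -e1 -e2; ring.
Qed.

Definition Pcol (V : finType) (e : rel V) t a b := exists c, unitc c /\ Col e t a b c.

Lemma Pcol_add (V : finType) (e : rel V) s t a b b' :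
  Pcol e t a b -> Pcol e s b b' -> Pcol e (s + t) a b'.
Proof.
move=> [c [hc h1]] [d [hd h2]]; exists (cmul d c); split; first exact: unitc_mul.
exact: Col_add h1 h2.
Qed.

Lemma Pcol_conj (V : finType) (e : rel V) t a b : Pcol e t a b -> Pcol e (- t) a b.
Proof. move=> [c [hc h]]; exists (conjc c); split; [exact: unitc_conj | exact: Col_conj]. Qed.

Lemma Pcol_inv (V : finType) (e : rel V) t a b : Pcol e t a b -> Pcol e (- t) b a.
Proof. move=> [c [hc h]]; exists (conjc c); split; [exact: unitc_conj | exact: Col_inv]. Qed.

Lemma Pcol_0 (V : finType) (e : rel V) a : Pcol e 0 a a.
Proof. exists (1, 0); split; first exact: unitc_1. by move=> x; rewrite Ent_0. Qed.

Lemma Pcol_nat (V : finType) (e : rel V) t a : Pcol e t a a -> forall n, Pcol e (INR n * t) a a.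
Proof.
move=> h; elim=> [|n IH]; first by rewrite Rmult_0_l; exact: Pcol_0.
have -> : INR n.+1 * t = t + INR n * t by rewrite S_INR; ring.
exact: Pcol_add IH h.
Qed.

Lemma Pcol_Z (V : finType) (e : rel V) t a : Pcol e t a a -> forall m, Pcol e (IZR m * t) a a.
Proof.
move=> h [|p|p].
- by rewrite Rmult_0_l; exact: Pcol_0.
- by change (IZR (Z.pos p)) with (IPR p); rewrite -INR_IPR; exact: Pcol_nat.
- have -> : IZR (Z.neg p) * t = - (INR (Pos.to_nat p) * t).
    by change (IZR (Z.neg p)) with (- IPR p); rewrite -INR_IPR; ring.
  exact/Pcol_conj/Pcol_nat.
Qed.

Lemma near1 (a : nat -> R) X :
  (forall k, Rabs (a k) <= bnd X k) ->
  Rabs (Series a - a 0%N) <= exp X - 1.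
Proof.
move=> H.
have xa : ex_series (fun k => Rabs (a k)).
  apply: (ex_series_le _ (bnd X)); last exact: bnd_ex.
  by move=> n; rewrite /norm /= /abs /= Rabs_Rabsolu.
have xa' := ex_series_Rabs _ xa.
rewrite (Series_incr_1 _ xa') /Rminus Rplus_comm -Rplus_assoc Rplus_opp_l Rplus_0_l.
have xs : ex_series (fun k => Rabs (a k.+1)) by move: xa => /ex_series_incr_1.
apply: Rle_trans; first exact: Series_Rabs.
have xb : ex_series (fun k => bnd X k.+1) by have := @bnd_ex X => /ex_series_incr_1.
apply: Rle_trans; first apply: (Series_le _ (fun k => bnd X k.+1)) => // n.
  by split; [exact: Rabs_pos | exact: H].
rewrite -(is_series_unique _ _ (@bnd_is_series X)) (Series_incr_1 _ (@bnd_ex X)).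
rewrite /bnd /= /Rdiv Rinv_1; lra.
Qed.

Lemma Ent_near (V : finType) (e : rel V) t v :
  Rabs ((Ent e t v v).1 - 1) <= exp (Rabs t * INR #|V|) - 1 /\
  Rabs ((Ent e t v v).2) <= exp (Rabs t * INR #|V|) - 1.
Proof.
split.
- have := @near1 (re e t v v) _ (fun k => (Hterm_bound e t v v k).1).
  suff -> : re e t v v 0%N = 1 by [].
  by rewrite /re /Hterm /negi_pow /= eqxx /=; field.
- have := @near1 (im e t v v) _ (fun k => (Hterm_bound e t v v k).2).
  suff -> : im e t v v 0%N = 0 by rewrite Rminus_0_r.
  by rewrite /im /Hterm /negi_pow /=; ring.
Qed.

Lemma exp_small eps : 0 < eps -> exists d, 0 < d /\ forall x, Rabs x < d -> exp x - 1 < eps.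
Proof.
move=> he.
have [alp [ha H]] := derivable_continuous_pt _ _ (derivable_pt_exp 0) eps he.
exists alp; split => // x hx.
case: (Req_dec x 0) => [->|nx]; first by rewrite exp_0; lra.
have := H x; rewrite exp_0 /= /R_dist /Rdist Rminus_0_r => K.
have := K (conj (conj I (not_eq_sym nx)) hx).
move=> /Rabs_def2 [h1 h2]; lra.
Qed.

Lemma Cmod_unit c : unitc c -> Cmod c = 1.
Proof. rewrite /unitc /Cmod => ->; exact: sqrt_1. Qed.

Lemma Cmod_mul c d : Cmod (cmul c d) = Cmod c * Cmod d.
Proof.
rewrite /Cmod /cmul /= -sqrt_mult; try nra.
congr sqrt; ring.
Qed.

Lemma Cmod_near z : Rabs (Cmod z - 1) <= Rabs (z.1 - 1) + Rabs z.2.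
Proof.
rewrite /Cmod.
have h0 : 0 <= z.1 * z.1 + z.2 * z.2 by nra.
have hs := sqrt_sqrt _ h0. have hp := sqrt_pos (z.1 * z.1 + z.2 * z.2).
move: hs hp; move: (sqrt _) => r hs hp.
have h1 : r <= Rabs z.1 + Rabs z.2.
  have := Rabs_pos z.1; have := Rabs_pos z.2.
  have : Rabs z.1 * Rabs z.1 = z.1 * z.1 by rewrite -Rabs_mult Rabs_pos_eq; nra.
  have : Rabs z.2 * Rabs z.2 = z.2 * z.2 by rewrite -Rabs_mult Rabs_pos_eq; nra.
  nra.
have h2 : Rabs z.1 <= r.
  have := Rabs_pos z.1.
  have : Rabs z.1 * Rabs z.1 = z.1 * z.1 by rewrite -Rabs_mult Rabs_pos_eq; nra.
  nra.
have := Rabs_triang_inv z.1 1. rewrite Rabs_R1.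
have := Rabs_triang_inv 1 z.1. rewrite Rabs_R1 Rabs_minus_sym.
move=> *; apply: Rabs_le; split; lra.
Qed.


Lemma pascal_conv (A B : nat -> nat) n :
  (\sum_(k < n.+2) 'C(n.+1, k) * A k * B (n.+1 - k) =
   \sum_(k < n.+1) 'C(n, k) * A k.+1 * B (n - k) +
   \sum_(k < n.+1) 'C(n, k) * A k * B (n.+1 - k))%N.
Proof.
rewrite big_ord_recl /= bin0.
under eq_bigr do rewrite binS mulnDl mulnDl.
rewrite big_split /= addnA addnC; congr (_ + _)%N.
  rewrite [in RHS]big_ord_recl /= bin0 subn0; congr (_ + _)%N.
  rewrite big_ord_recr /= bin_small // mul0n mul0n addn0.
  by apply: eq_bigr => k _; rewrite /bump /= add1n.
Qed.

Lemma sum_pair1 (V1 V2 : finType) (F : V1 * V2 -> nat) (P : pred V1) (b : V2) :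
  (\sum_(z : V1 * V2) (if P z.1 && (b == z.2) then F z else 0) = \sum_(z1 | P z1) F (z1, b))%N.
Proof.
transitivity (\sum_(z1 : V1) \sum_(z2 : V2) (if P z1 && (b == z2) then F (z1, z2) else 0))%N.
  by rewrite pair_bigA; apply: eq_bigr => -[z1 z2] _.
rewrite [in RHS]big_mkcond; apply: eq_bigr => z1 _.
case: (P z1) => /=; last by rewrite big1.
rewrite (bigD1 b) //= eqxx big1 ?addn0 // => z2 hz.
by rewrite eq_sym (negbTE hz).
Qed.

Lemma sum_pair2 (V1 V2 : finType) (F : V1 * V2 -> nat) (P : pred V2) (a : V1) :
  (\sum_(z : V1 * V2) (if (a == z.1) && P z.2 then F z else 0) = \sum_(z2 | P z2) F (a, z2))%N.
Proof.
transitivity (\sum_(z1 : V1) \sum_(z2 : V2) (if (a == z1) && P z2 then F (z1, z2) else 0))%N.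
  by rewrite pair_bigA; apply: eq_bigr => -[z1 z2] _.
rewrite (bigD1 a) //= eqxx /= [X in (_ + X)%N]big1 ?addn0.
  by rewrite [RHS]big_mkcond.
move=> z1 hz; rewrite big1 // => z2 _; by rewrite eq_sym (negbTE hz).
Qed.

Lemma sum_cart (V1 V2 : finType) (e1 : rel V1) (e2 : rel V2) (h1 : irreflexive e1)
  (F : V1 * V2 -> nat) a b :
  (\sum_(z | cart_rel e1 e2 (a, b) z) F z =
   \sum_(z1 | e1 a z1) F (z1, b) + \sum_(z2 | e2 b z2) F (a, z2))%N.
Proof.
rewrite -sum_pair1 -sum_pair2 -big_split big_mkcond /=; apply: eq_bigr => -[z1 z2] _ /=.
rewrite /cart_rel /=.
case E1: (e1 a z1 && (b == z2)); case E2: ((a == z1) && e2 b z2) => //=; rewrite ?addn0 //.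
move: E1 E2 => /andP [h _] /andP [/eqP ha _]; by rewrite -ha h1 in h.
Qed.

Lemma adjpow_cart (V1 V2 : finType) (e1 : rel V1) (e2 : rel V2) (h1 : irreflexive e1) n a b c d :
  adjpow (cart_rel e1 e2) n (a, b) (c, d) =
  (\sum_(k < n.+1) 'C(n, k) * adjpow e1 k a c * adjpow e2 (n - k) b d)%N.
Proof.
elim: n a b => [|n IH] a b.
  rewrite big_ord1 /= bin0 mul1n.
  by rewrite xpair_eqE; case: (a == c); case: (b == d).
rewrite /= sum_cart // (pascal_conv (fun k => adjpow e1 k a c) (fun k => adjpow e2 k b d)).
congr (_ + _)%N.
- under eq_bigr do rewrite IH.
  rewrite exchange_big /=; apply: eq_bigr => k _.
  by rewrite /= big_distrr /= big_distrl /=.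
- under eq_bigr do rewrite IH.
  rewrite exchange_big /=; apply: eq_bigr => k _.
  have hk : (k <= n)%N by rewrite -ltnS ltn_ord.
  by rewrite (subSn hk) /= big_distrr /=.
Qed.


Lemma fact_eq m : Factorial.fact m = m`!.
Proof. elim: m => [|m IH] //=; by rewrite IH factS. Qed.

Lemma INR_ord_sum (f : nat -> nat) n :
  INR (\sum_(k < n.+1) f k)%N = sum_f_R0 (fun k => INR (f k)) n.
Proof.
elim: n => [|n IH]; first by rewrite big_ord1.
by rewrite big_ord_recr /= plus_INR IH.
Qed.

Lemma coef_cart (V1 V2 : finType) (e1 : rel V1) (e2 : rel V2) (h1 : irreflexive e1) t a b c d n :
  coef (cart_rel e1 e2) t (a, b) (c, d) n =
  sum_f_R0 (fun k => coef e1 t a c k * coef e2 t b d (n - k)%coq_nat) n.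
Proof.
rewrite /coef adjpow_cart // (INR_ord_sum (fun k => 'C(n, k) * adjpow e1 k a c * adjpow e2 (n - k) b d)%N) scal_sum; apply: PartSum.sum_eq => k hk.
have hk' : (k <= n)%N by apply/leP.
have hb := bin_fact hk'.
have hbR : INR 'C(n, k) * (INR (fact k) * INR (fact (n - k)%coq_nat)) = INR (fact n).
  by rewrite !fact_eq -!mult_INR; congr INR; exact: hb.
have ht : t ^ n = t ^ k * t ^ (n - k)%coq_nat by rewrite -pow_add; congr pow; lia.
have f1 := INR_fact_neq_0 n. have f2 := INR_fact_neq_0 k. have f3 := INR_fact_neq_0 (n - k)%coq_nat.
have hC : INR 'C(n, k) = INR (fact n) / (INR (fact k) * INR (fact (n - k)%coq_nat)).
  by rewrite -hbR; field; auto.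
rewrite !mult_INR ht hC.
change (n - k)%coq_nat with (n - k)%N in f3 |- *.
field; auto.
Qed.

Lemma re_coef (V : finType) (e : rel V) t x y n : re e t x y n = np1 n * coef e t x y n.
Proof. by []. Qed.
Lemma im_coef (V : finType) (e : rel V) t x y n : im e t x y n = np2 n * coef e t x y n.
Proof. by []. Qed.

Lemma Ent_cart (V1 V2 : finType) (e1 : rel V1) (e2 : rel V2) (h1 : irreflexive e1) t a b c d :
  Ent (cart_rel e1 e2) t (a, b) (c, d) = cmul (Ent e1 t a c) (Ent e2 t b d).
Proof.
have P := exp_prod (coef_bnd e1 t a c) (coef_bnd e2 t b d).
rewrite /Ent; apply: injective_projections; apply: is_series_unique.
- move: P.1; apply: is_series_ext => n; by rewrite re_coef coef_cart.
- move: P.2; apply: is_series_ext => n; by rewrite im_coef coef_cart.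
Qed.


Definition fl (x : R) : Z := (up x - 1)%Z.

Lemma fl_spec x : IZR (fl x) <= x < IZR (fl x) + 1.
Proof.
have [h1 h2] := archimed x. rewrite /fl minus_IZR; lra.
Qed.

Lemma pigeon (M : nat) (F : 'I_M.+2 -> 'I_M.+1) : exists i j, i <> j /\ F i = F j.
Proof.
apply: NNPP => H.
have inj : injective F.
  move=> i j hij; apply: NNPP => hne; apply: H; by exists i, j.
have := leq_card F inj; rewrite !card_ord; lia.
Qed.

Lemma dirichlet (al : R) (M : nat) :
  exists q p : Z, q <> 0%Z /\ Rabs (IZR q * al - IZR p) < / INR M.+1.
Proof.
pose f (j : nat) := INR j * al - IZR (fl (INR j * al)).
have f01 j : 0 <= f j < 1 by have := fl_spec (INR j * al); rewrite /f; lra.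
pose bk (j : nat) := fl (INR M.+1 * f j).
have hN : 0 < INR M.+1 by apply: lt_0_INR; lia.
have bk_ok j : (0 <= bk j)%Z /\ (bk j < Z.of_nat M.+1)%Z.
  have := fl_spec (INR M.+1 * f j); have := f01 j; rewrite /bk => hf hb0.
  have b1 : -1 < IZR (fl (INR M.+1 * f j)) by nra.
  have b2 : IZR (fl (INR M.+1 * f j)) < INR M.+1 by nra.
  move: b1 b2; move: (fl (INR M.+1 * f j)) => z b1 b2.
  have c1 := lt_IZR _ _ b1.
  have c2 : (z < Z.of_nat M.+1)%Z by apply: lt_IZR; rewrite -INR_IZR_INZ.
  lia.
pose F (j : 'I_M.+2) : 'I_M.+1 := inord (Z.to_nat (bk j)).
have [i0 [j0 [hij hF]]] := pigeon F.
have hb : bk i0 = bk j0.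
  have := congr1 (@nat_of_ord _) hF; rewrite /F !inordK.
  - have [a1 a2] := bk_ok i0; have [b1 b2] := bk_ok j0; lia.
  - have [b1 b2] := bk_ok j0; apply/ltP; lia.
  - have [a1 a2] := bk_ok i0; apply/ltP; lia.
exists (Z.of_nat i0 - Z.of_nat j0)%Z, (fl (INR i0 * al) - fl (INR j0 * al))%Z; split.
  move=> h; apply: hij; apply: val_inj => /=; lia.
have hi := fl_spec (INR M.+1 * f i0); have hj := fl_spec (INR M.+1 * f j0).
rewrite -/(bk i0) -/(bk j0) hb in hi hj.
have : Rabs (INR M.+1 * f i0 - INR M.+1 * f j0) < 1 by apply: Rabs_def1; lra.
rewrite -Rmult_minus_distr_l Rabs_mult Rabs_pos_eq; last lra.
move=> h.
have -> : IZR (Z.of_nat i0 - Z.of_nat j0) * al - IZR (fl (INR i0 * al) - fl (INR j0 * al)) = f i0 - f j0.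
  rewrite /f !minus_IZR -!INR_IZR_INZ; ring.
apply: (Rmult_lt_reg_l (INR M.+1)) => //; rewrite Rinv_r; lra.
Qed.

Lemma Q2R_Z z : Q2R (inject_Z z) = IZR z.
Proof. rewrite /Q2R /=; field. Qed.

Lemma kron tau eta : eta <> 0 -> Q_lin_indep tau eta ->
  forall dl, 0 < dl -> exists m k : Z, Rabs (IZR m * tau - (eta + IZR k * (eta + eta))) < dl.
Proof.
move=> he hq dl hdl.
set be := eta + eta.
have hbe : 0 < Rabs be by apply: Rabs_pos_lt; rewrite /be; lra.
have [N [hN1 hN2]] := archimed_cor1 (dl / Rabs be) (Rdiv_lt_0_compat _ _ hdl hbe).
destruct N as [|M]; first lia.
have [q [p [hq0 hqp]]] := dirichlet (tau / be) M.
set d := IZR q * tau - IZR p * be.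
have hd : d = be * (IZR q * (tau / be) - IZR p) by rewrite /d; field; rewrite /be; lra.
have hdl' : Rabs d < dl.
  rewrite hd Rabs_mult.
  have hM : 0 < INR M.+1 by apply: lt_0_INR; lia.
  have : Rabs be * / INR M.+1 < dl.
    have := Rmult_lt_compat_l _ _ _ hbe hN1.
    have -> : Rabs be * (dl / Rabs be) = dl by field; lra.
    done.
  have := Rabs_pos (IZR q * (tau / be) - IZR p). nra.
have hd0 : d <> 0.
  move=> h0; apply: hq0.
  have := hq (inject_Z q) (inject_Z (- (2 * p))).
  rewrite !Q2R_Z => /(_ _)[]; first by rewrite opp_IZR mult_IZR /d /be in h0 *; lra.
  rewrite /Qeq /= => h1 _; lia.
set r := be / (2 * d).
have [f1 f2] := fl_spec r.
exists (fl r * q)%Z, (fl r * p)%Z.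
have -> : IZR (fl r * q) * tau - (eta + IZR (fl r * p) * be) = d * (IZR (fl r) - r).
  rewrite /r !mult_IZR /d /be; field; exact: hd0.
rewrite Rabs_mult.
have : Rabs (IZR (fl r) - r) < 1 by apply: Rabs_def1; lra.
have := Rabs_pos (IZR (fl r) - r). have := Rabs_pos d. nra.
Qed.


Lemma unit_of_Cmod c : Cmod c = 1 -> unitc c.
Proof.
rewrite /Cmod /unitc => h.
have h0 : 0 <= c.1 * c.1 + c.2 * c.2 by nra.
by rewrite -(sqrt_sqrt _ h0) h Rmult_1_l.
Qed.

Lemma Col_of_H (V : finType) (e : rel V) t a b g :
  (forall x, H_entry e t x a (Cscale g (x == b))) -> Col e t a b g.
Proof. by move=> H x; rewrite -(H_Ent (H x)). Qed.

Unset Implicit Arguments.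

Theorem theorem4p2 (V1 V2 : finType) (e1 : rel V1) (e2 : rel V2)
    (G1 : simple_graph e1) (G2 : simple_graph e2)
    (u : V1) (v w : V2) (tau eta : R) :
  tau <> 0 -> eta <> 0 ->
  (exists g : Cx, Cmod g = 1 /\
     forall x : V1, H_entry e1 tau x u (Cscale g (x == u))) ->
  (exists g' : Cx, Cmod g' = 1 /\
     forall x : V2, H_entry e2 eta x w (Cscale g' (x == v))) ->
  Q_lin_indep tau eta ->
  pgst (cart_rel e1 e2) (u, v) (u, w).
Proof.
move=> htau heta [g [hg Hg]] [g' [hg' Hg']] hq.
have irr1 : irreflexive e1 by case: G1.
have P1 : Pcol e1 tau u u by exists g; split; [exact: unit_of_Cmod | exact: Col_of_H].
have P2 : Pcol e2 eta w v by exists g'; split; [exact: unit_of_Cmod | exact: Col_of_H].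
have P3 : Pcol e2 eta v w.
  have := Pcol_inv (Pcol_conj P2); by rewrite Ropp_involutive.
have P4 : Pcol e2 (eta + eta) w w := Pcol_add P2 P3.
have P5 k : Pcol e2 (eta + IZR k * (eta + eta)) w v.
  exact: Pcol_add (Pcol_Z P4 k) P2.
move=> eps heps.
have [d0 [hd0 Hd0]] := exp_small (Rdiv_lt_0_compat _ _ heps Rlt_0_2).
have hN : 0 <= INR #|V2| := pos_INR _.
have [m [k hmk]] := kron heta hq (Rdiv_lt_0_compat _ _ hd0 (Rle_lt_0_plus_1 _ hN)).
set s0 := eta + IZR k * (eta + eta) in hmk P5.
set t := IZR m * tau in hmk *.
set dt := t - s0 in hmk.
exists t, (Ent (cart_rel e1 e2) t (u, v) (u, w)); split; first exact: Ent_H.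
rewrite Ent_cart //.
have [c1 [hc1 C1]] := Pcol_Z P1 m.
have [c2 [hc2 C2]] := P5 k.
rewrite (C1 u) eqxx /=.
have -> : t = dt + s0 by rewrite /dt; ring.
rewrite (Ent_add_col dt C2 v) !Cmod_mul (Cmod_unit hc1) (Cmod_unit hc2) Rmult_1_l Rmult_1_r.
have [n1 n2] := Ent_near e2 dt v.
have hX : Rabs (Rabs dt * INR #|V2|) < d0.
  rewrite Rabs_pos_eq; last by apply: Rmult_le_pos; [exact: Rabs_pos | exact: hN].
  have : Rabs dt * (INR #|V2| + 1) < d0.
    have := Rmult_lt_compat_r (INR #|V2| + 1) _ _ ltac:(lra) hmk.
    have -> : d0 / (INR #|V2| + 1) * (INR #|V2| + 1) = d0 by field; lra.
    done.
  have := Rabs_pos dt. nra.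
have := Hd0 _ hX.
have := Cmod_near (Ent e2 dt v v).
lra.
Qed.
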